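(* Let $g=\frac{\sqrt5-1}2$, $g\le\alpha<\beta\le1$, $(x,y)\in\Omega_\alpha$, $(\tilde x,\tilde y)\in S(x,y)$, and $(x_n,y_n)=\mathcal T_\alpha^n(x,y)$ for some $n\ge1$. If $\tilde x\in[\beta-1,\beta)$ and $y_n<1-\frac1{\sqrt2}$, then there is some $k\ge1$ such that $\mathcal T_\beta^k(\tilde x,\tilde y)\in S(x_n,y_n)$.
   Context: For $\alpha\in[\tfrac12,1]$: $T_\alpha(x)=\frac1x-\lfloor\frac1x+1-\alpha\rfloor$ on $[\alpha-1,\alpha)\setminus\{0\}$, $T_\alpha(0)=0$; $\mathcal T_\alpha(x,y)=\left(T_\alpha(x),\frac{1}{y+\lfloor\frac1x+1-\alpha\rfloor}\right)$ for $x\ne0$, $\mathcal T_\alpha(0,y)=(0,0)$; $\Omega_\alpha=\bigcup_{n\ge0}\overline{\mathcal T_\alpha^n([\alpha-1,\alpha)\times\{0\})}$. For a point $(x,y)$, $S(x,y)=\{(x,y),(-x,-y),(x+1,\frac{y}{1-y}),(1-x,\frac{-y}{y+1})\}$. *)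

(* Defs.v *)
From Stdlib Require Import Reals.
Open Scope R_scope.

(* floor function: Int_part r = up r - 1 is the greatest integer <= r *)
Definition floorR (r : R) : R := IZR (Int_part r).

Definition digit (alpha x : R) : R := floorR (/ x + 1 - alpha).

Definition T (alpha x : R) : R :=
  if Req_EM_T x 0 then 0 else / x - digit alpha x.

Definition TT (alpha : R) (p : R * R) : R * R :=
  let (x, y) := p in
  if Req_EM_T x 0 then (0, 0)
  else (T alpha x, / (y + digit alpha x)).

Definition TTn (alpha : R) (n : nat) (p : R * R) : R * R :=
  Nat.iter n (TT alpha) p.

(* closure in R^2 (sup-norm balls; same topology as Euclidean) *)
Definition closure2 (A : R * R -> Prop) (p : R * R) : Prop :=
  forall eps, eps > 0 -> exists q, A q /\
    Rabs (fst q - fst p) < eps /\ Rabs (snd q - snd p) < eps.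

Definition image_n (alpha : R) (n : nat) (p : R * R) : Prop :=
  exists x0, alpha - 1 <= x0 < alpha /\ p = TTn alpha n (x0, 0).

Definition Omega (alpha : R) (p : R * R) : Prop :=
  exists n : nat, closure2 (image_n alpha n) p.

Definition S (p : R * R) (q : R * R) : Prop :=
  let (x, y) := p in
  q = (x, y) \/ q = (- x, - y) \/ q = (x + 1, y / (1 - y)) \/
  q = (1 - x, - y / (y + 1)).

Definition g : R := (sqrt 5 - 1) / 2.

(* Main.v *)
Require Import Defs.
From Stdlib Require Import Reals Lra Lia Psatz.
Open Scope R_scope.

Lemma floor_char r z : IZR z <= r < IZR z + 1 -> Int_part r = z.
Proof.
  intros [H1 H2]. destruct (base_Int_part r) as [H3 H4].
  assert (IZR (Int_part r) < IZR (z + 1)) by (rewrite plus_IZR; lra).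
  assert (IZR z < IZR (Int_part r + 1)) by (rewrite plus_IZR; lra).
  apply lt_IZR in H. apply lt_IZR in H0. lia.
Qed.

Lemma digit_char a x z : IZR z <= / x + 1 - a < IZR z + 1 -> digit a x = IZR z.
Proof. intros H. unfold digit, floorR. now rewrite (floor_char _ z H). Qed.

Lemma digit_bounds a x : digit a x <= / x + 1 - a < digit a x + 1.
Proof. unfold digit, floorR. destruct (base_Int_part (/ x + 1 - a)). lra. Qed.

Lemma TT_nz a x y : x <> 0 -> TT a (x, y) = (/ x - digit a x, / (y + digit a x)).
Proof. intros H. unfold TT, T. destruct (Req_EM_T x 0); [contradiction | reflexivity]. Qed.

Lemma TT_0 a y : TT a (0, y) = (0, 0).
Proof. unfold TT. destruct (Req_EM_T 0 0); [reflexivity | contradiction]. Qed.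

Lemma TT_range b p : 0 < b <= 1 -> b - 1 <= fst (TT b p) < b.
Proof.
  intros Hb. destruct p as [x y]. destruct (Req_dec x 0).
  - subst. rewrite TT_0. simpl. lra.
  - rewrite TT_nz by auto. simpl. pose proof (digit_bounds b x). lra.
Qed.

Lemma g_facts : 0.6 < g /\ g * g + g - 1 = 0.
Proof.
  unfold g. pose proof (sqrt_sqrt 5 ltac:(lra)). pose proof (sqrt_pos 5).
  split; nra.
Qed.

Lemma s_facts : sqrt 2 * sqrt 2 = 2 /\ 1.41 < sqrt 2 < 1.42.
Proof.
  pose proof (sqrt_sqrt 2 ltac:(lra)). pose proof (sqrt_pos 2). split; [auto|split; nra].
Qed.

Lemma alpha_facts a : g <= a -> 0.6 < a /\ a * a + a - 1 >= 0.
Proof. intros H. destruct g_facts. split; nra. Qed.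

Lemma id1 a : a <> 0 -> / (a - 1) = / a / (1 - / a).
Proof.
  intros H. destruct (Req_dec a 1).
  - subst. replace (1 - 1) with 0 by ring. rewrite Rinv_1. replace (1 - 1) with 0 by ring.
    unfold Rdiv. rewrite Rinv_0. ring.
  - field. split; auto. intro. apply H0. lra.
Qed.

Lemma id2 a : a <> 0 -> / (- a - 1) = - / a / (/ a + 1).
Proof.
  intros H. destruct (Req_dec a (-1)).
  - subst. replace (- -1 - 1) with 0 by ring. rewrite Rinv_0.
    assert (E: / -1 = -1) by field.
    rewrite E. replace (-1 + 1) with 0 by ring. unfold Rdiv. rewrite Rinv_0. ring.
  - field. repeat split; try assumption; intro; apply H0; lra.
Qed.

Ltac unS := unfold S; cbv beta iota.

Lemma L_A a b x y : g <= a -> a < b -> b <= 1 -> (x <> 0 -> y + digit a x <> 0) ->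
  S (TT a (x,y)) (TT b (x,y)).
Proof.
  intros Ha Hab Hb Hy. destruct (Req_dec x 0).
  - subst. rewrite !TT_0. unS. left; reflexivity.
  - specialize (Hy H). rewrite !TT_nz by auto. pose proof (digit_bounds a x). destruct (alpha_facts a Ha).
    set (D := Int_part (/ x + 1 - a)) in *.
    assert (Hd : digit a x = IZR D) by reflexivity. rewrite Hd in *.
    destruct (Rle_dec (b-1) (/x - IZR D)).
    + rewrite (digit_char b x D) by lra. unS. left; reflexivity.
    + rewrite (digit_char b x (D-1)) by (rewrite minus_IZR; lra). unS. right; right; left.
      rewrite minus_IZR. f_equal; [ring|].
      replace (y + (IZR D - 1)) with ((y + IZR D) - 1) by ring. apply id1; auto.
Qed.

Lemma L_C a b x y : g <= a -> a < b -> b <= 1 -> (x <> 0 -> y + digit a x <> 0) ->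
  S (TT a (x,y)) (TT b (-x,-y)).
Proof.
  intros Ha Hab Hb Hy. destruct (Req_dec x 0).
  - subst. rewrite Ropp_0, !TT_0. unS. left; reflexivity.
  - specialize (Hy H). assert (-x <> 0) by lra.
    rewrite !TT_nz by auto. pose proof (digit_bounds a x). destruct (alpha_facts a Ha).
    set (D := Int_part (/ x + 1 - a)) in *.
    assert (Hd : digit a x = IZR D) by reflexivity. rewrite Hd in *.
    rewrite Rinv_opp.
    destruct (Rle_dec (/x - IZR D) (1 - b)).
    + rewrite (digit_char b (-x) (-D)) by (rewrite Rinv_opp, opp_IZR; lra). unS.
      right; left. rewrite opp_IZR. f_equal; [ring|].
      replace (- y + - IZR D) with (- (y + IZR D)) by ring. apply Rinv_opp.
    + rewrite (digit_char b (-x) (-D-1)) by (rewrite Rinv_opp, minus_IZR, opp_IZR; lra). unS.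
      right; right; right. rewrite minus_IZR, opp_IZR. f_equal; [ring|].
      replace (- y + (- IZR D - 1)) with (- (y + IZR D) - 1) by ring. apply id2; auto.
Qed.

Lemma L_F a b x y : g <= a -> a < b -> b <= 1 -> x <> -1 -> (x <> 0 -> y + digit a x <> 0) ->
  S (TT a (x,y)) (TT b (- x / (x + 1), 1 - y)).
Proof.
  intros Ha Hab Hb Hx1 Hy. destruct (Req_dec x 0).
  - subst. replace (-0/(0+1)) with 0 by field. rewrite !TT_0. unS. left; reflexivity.
  - specialize (Hy H). assert (Hz : - x / (x + 1) <> 0).
    { unfold Rdiv. apply Rmult_integral_contrapositive; split; [lra|].
      apply Rinv_neq_0_compat. lra. }
    assert (Hinv : / (- x / (x + 1)) = -1 - / x) by (field; split; lra).
    rewrite !TT_nz by auto. pose proof (digit_bounds a x). destruct (alpha_facts a Ha).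
    set (D := Int_part (/ x + 1 - a)) in *.
    assert (Hd : digit a x = IZR D) by reflexivity. rewrite Hd in *.
    rewrite Hinv.
    destruct (Rle_dec (/x - IZR D) (1 - b)).
    + rewrite (digit_char b _ (-D-1)) by (rewrite Hinv, minus_IZR, opp_IZR; lra). unS.
      right; left. rewrite minus_IZR, opp_IZR. f_equal; [ring|].
      replace (1 - y + (- IZR D - 1)) with (- (y + IZR D)) by ring. apply Rinv_opp.
    + rewrite (digit_char b _ (-D-2)) by (rewrite Hinv, minus_IZR, opp_IZR; lra). unS.
      right; right; right. rewrite minus_IZR, opp_IZR. f_equal; [ring|].
      replace (1 - y + (- IZR D - 2)) with (- (y + IZR D) - 1) by ring. apply id2; auto.
Qed.

Lemma L_g b x y : x <> 0 -> x <> 1 -> TT b (x / (1 - x), y + 1) = TT b (x, y).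
Proof.
  intros H0 H1. assert (Hv : x / (1 - x) <> 0).
  { unfold Rdiv. apply Rmult_integral_contrapositive; split; [lra|].
    apply Rinv_neq_0_compat. lra. }
  assert (Hinv : / (x / (1 - x)) = / x - 1) by (field; split; lra).
  rewrite !TT_nz by auto. pose proof (digit_bounds b x).
  set (E := Int_part (/ x + 1 - b)) in *.
  assert (Hd : digit b x = IZR E) by reflexivity. rewrite Hd in *.
  rewrite (digit_char b _ (E-1)) by (rewrite Hinv, minus_IZR; lra).
  rewrite Hinv, minus_IZR. f_equal; [ring| f_equal; ring].
Qed.

Lemma L_Dd1 a b x y : 0 < x < 1 -> y <> -1 -> digit a x = 1 ->
  TT b (1 - x, - y / (y + 1)) = TT b (TT a (x, y)).
Proof.
  intros Hx Hy Hd. rewrite (TT_nz a) by lra. rewrite Hd.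
  assert (Hx1 : / x - 1 <> 0).
  { assert (/ x > 1). { rewrite <- Rinv_1. apply Rinv_lt_contravar; lra. } lra. }
  assert (Hinv : / (1 - x) = 1 + / (/ x - 1)) by (field; repeat split; lra).
  rewrite !TT_nz by lra. pose proof (digit_bounds b (/ x - 1)).
  set (E := Int_part (/ (/ x - 1) + 1 - b)) in *.
  assert (He : digit b (/ x - 1) = IZR E) by reflexivity. rewrite He in *.
  rewrite (digit_char b _ (E+1)) by (rewrite Hinv, plus_IZR; lra).
  rewrite Hinv, plus_IZR. f_equal; [ring| f_equal; field; lra].
Qed.

Lemma L_De1 b x y : 0 < x < 1 -> y <> -1 -> b <= 1 -> x / (1 - x) < b ->
  TT b (1 - x, - y / (y + 1)) = (x / (1 - x), y + 1).
Proof.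
  intros Hx Hy Hb Hv. rewrite TT_nz by lra.
  assert (Hinv : / (1 - x) = 1 + x / (1 - x)) by (field; lra).
  assert (0 < x / (1 - x)) by (apply Rdiv_lt_0_compat; lra).
  rewrite (digit_char b _ 1) by (rewrite Hinv; lra).
  f_equal; [rewrite Hinv; ring| field; lra].
Qed.

Lemma L_De2 b x y : 0 < x < 1 -> y <> -1 -> y <> -2 -> b <= x / (1 - x) < 1 + b ->
  TT b (1 - x, - y / (y + 1)) = (- (/ x - 2) / ((/ x - 2) + 1), 1 - / (y + 2)).
Proof.
  intros Hx Hy Hy2 Hv. rewrite TT_nz by lra.
  assert (Hinv : / (1 - x) = 1 + x / (1 - x)) by (field; lra).
  rewrite (digit_char b _ 2) by (rewrite Hinv; lra).
  f_equal; [field; lra| field; lra].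
Qed.

Lemma L_B a b x y : g <= a -> a <= x + 1 < b -> b <= 1 -> y <> 1 ->
  TT b (x + 1, y / (1 - y)) = (- x / (x + 1), 1 - y).
Proof.
  intros Ha Hx Hb Hy. destruct (alpha_facts a Ha).
  rewrite TT_nz by lra.
  assert (/ (x + 1) > 1). { rewrite <- Rinv_1. apply Rinv_lt_contravar; lra. }
  assert (/ (x + 1) <= / a) by (apply Rinv_le_contravar; lra).
  assert (/ a <= 1 + a).
  { assert (a * / a = 1) by (field; lra). nra. }
  rewrite (digit_char b _ 1) by lra.
  f_equal; [field; lra| field; lra].
Qed.

Definition Rg (a : R) (p : R * R) : Prop :=
  let (x, y) := p in
  a - 1 <= x <= a /\ 1 - sqrt 2 <= y <= sqrt 2 /\ (x < 0 -> y <= 2 - sqrt 2) /\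
  (y < sqrt 2 / 2 - 1 -> x * (2 + a) <= 1).

Lemma Dint a x : exists D : Z, digit a x = IZR D.
Proof. exists (Int_part (/ x + 1 - a)). reflexivity. Qed.

Lemma D_neg a x : g <= a <= 1 -> a - 1 <= x < 0 -> digit a x <= -3.
Proof.
  intros Ha Hx. destruct (alpha_facts a (proj1 Ha)) as [H1 H2].
  pose proof (digit_bounds a x). destruct (Dint a x) as [D HD]. rewrite HD in *.
  assert (Hu : x * / x = 1) by (field; lra).
  assert (Hun : / x < 0) by (apply Rinv_neg; lra).
  assert (Hua : / x * (a - 1) >= 1) by nra.
  assert (Hq : (/ x + 3 - a) * (1 - a) <= a * a - 4 * a + 2) by nra.
  assert (a < 1) by lra.
  assert (/ x + 3 - a < 0) by nra.
  assert (HZ: IZR D < -2) by lra. apply lt_IZR in HZ.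
  apply IZR_le. lia.
Qed.

Lemma D_pos a x : g <= a <= 1 -> 0 < x <= a -> 1 <= digit a x.
Proof.
  intros Ha Hx. destruct (alpha_facts a (proj1 Ha)) as [H1 H2].
  pose proof (digit_bounds a x). destruct (Dint a x) as [D HD]. rewrite HD in *.
  assert (/ x >= 1). { rewrite <- Rinv_1. apply Rle_ge, Rinv_le_contravar; lra. }
  assert (HZ: 0 < IZR D) by lra. apply lt_IZR in HZ. apply IZR_le. lia.
Qed.

Lemma D_big a x : g <= a <= 1 -> 0 < x -> x * (2 + a) <= 1 -> 3 <= digit a x.
Proof.
  intros Ha Hx HE. destruct (alpha_facts a (proj1 Ha)) as [H1 H2].
  pose proof (digit_bounds a x). destruct (Dint a x) as [D HD]. rewrite HD in *.
  assert (Hu : x * / x = 1) by (field; lra).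
  assert (/ x > 0) by (apply Rinv_0_lt_compat; lra).
  assert (/ x >= 2 + a) by nra.
  assert (HZ: 2 < IZR D) by lra. apply lt_IZR in HZ. apply IZR_le. lia.
Qed.

Lemma Rg_nz a x y : g <= a <= 1 -> Rg a (x, y) -> x <> 0 -> y + digit a x <> 0.
Proof.
  intros Ha [Hx [Hy _]] H0. destruct s_facts as [Hs2 Hs].
  destruct (Rlt_dec x 0).
  - pose proof (D_neg a x Ha (conj (proj1 Hx) r)). lra.
  - assert (0 < x <= a) by lra. pose proof (D_pos a x Ha H). lra.
Qed.

Lemma Rg_TT a p : g <= a <= 1 -> Rg a p -> Rg a (TT a p).
Proof.
  destruct p as [x y]. intros Ha [Hx [Hy [Hneg HE]]].
  destruct s_facts as [Hs2 Hs]. destruct (alpha_facts a (proj1 Ha)) as [Ha1 Ha2].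
  destruct (Req_dec x 0) as [H0|H0].
  - subst. rewrite TT_0. unfold Rg. repeat split; try lra.
  - rewrite TT_nz by auto. pose proof (digit_bounds a x) as Hb.
    destruct (Dint a x) as [D HD]. rewrite HD in *.
    assert (Hu : x * / x = 1) by (field; lra).
    unfold Rg. split; [lra|].
    destruct (Rlt_dec x 0) as [Hxn|Hxp].
    + pose proof (D_neg a x Ha (conj (proj1 Hx) Hxn)) as HDn. rewrite HD in HDn.
      specialize (Hneg Hxn).
      assert (Hyd : y + IZR D < 0) by lra.
      assert (Hw : (y + IZR D) * / (y + IZR D) = 1) by (field; lra).
      assert (Hwn : / (y + IZR D) < 0) by (apply Rinv_neg; lra).
      set (w := / (y + IZR D)) in *.
      assert (Hw1 : w * (1 + sqrt 2) >= -1) by nra.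
      assert (Hw2 : (w - (1 - sqrt 2)) * (1 + sqrt 2) >= 0) by nra.
      assert (1 - sqrt 2 <= w) by nra.
      split; [lra|]. split; [intros; lra|].
      intros Hws.
      assert (Hp : (sqrt 2 / 2 - 1) * (y + IZR D) < 1) by nra.
      assert (Hp2 : (sqrt 2 / 2 - 1) * (y + IZR D + (2 + sqrt 2)) < 0) by nra.
      assert (Hp3 : y + IZR D + (2 + sqrt 2) > 0) by nra.
      assert (HZ : -4 < IZR D) by lra. apply lt_IZR in HZ.
      apply le_IZR in HDn. assert (HD3 : D = (-3)%Z) by lia. subst D.
      assert (Hun : / x < 0) by (apply Rinv_neg; lra).
      assert (Hua : / x * (a - 1) >= 1) by nra.
      assert (Hq : (/ x + 3) * (1 - a) <= 2 - 3 * a) by nra.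
      assert (Hq2 : (/ x + 3) * (1 - a) * (2 + a) <= (2 - 3 * a) * (2 + a)) by nra.
      assert (a < 1) by lra.
      nra.
    + assert (Hxp' : 0 < x <= a) by lra.
      pose proof (D_pos a x Ha Hxp') as HDp. rewrite HD in HDp.
      assert (Hux : / x >= 1). { rewrite <- Rinv_1. apply Rle_ge, Rinv_le_contravar; lra. }
      assert (Hyd : y + IZR D > 0) by lra.
      assert (Hw : (y + IZR D) * / (y + IZR D) = 1) by (field; lra).
      assert (Hwp : / (y + IZR D) > 0) by (apply Rinv_0_lt_compat; lra).
      set (w := / (y + IZR D)) in *.
      assert (HE' : y < sqrt 2 / 2 - 1 -> 3 <= IZR D).
      { intros Hy'. rewrite <- HD. apply D_big; auto; lra. }
      assert (HZ1 : (1 <= D)%Z) by (apply le_IZR; lra).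
      split; [split; [lra|]|].
      { assert (y + IZR D >= sqrt 2 / 2).
        { destruct (Z.eq_dec D 1) as [E1|E1].
          - subst D. destruct (Rlt_dec y (sqrt 2 / 2 - 1)) as [Hl|Hl].
            + specialize (HE' Hl). simpl in HE'. lra.
            + simpl. lra.
          - assert (HZ2 : (2 <= D)%Z) by lia. apply IZR_le in HZ2. lra. }
        nra. }
      split.
      { intros Ht.
        assert (y + IZR D >= 1 + sqrt 2 / 2).
        { destruct (Z.eq_dec D 1) as [E1|E1].
          - subst D. simpl in Ht. lra.
          - destruct (Z.eq_dec D 2) as [E2|E2].
            + subst D. destruct (Rlt_dec y (sqrt 2 / 2 - 1)) as [Hl|Hl].
              * specialize (HE' Hl). simpl in HE'. lra.
              * simpl. lra.
            + assert (HZ2 : (3 <= D)%Z) by lia. apply IZR_le in HZ2. lra. }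
        nra. }
      intros. lra.
Qed.

Lemma Rg_TTn a n p : g <= a <= 1 -> Rg a p -> Rg a (TTn a n p).
Proof.
  intros Ha Hp. induction n as [|n IH]; [exact Hp|].
  unfold TTn. simpl. apply Rg_TT; auto.
Qed.

Lemma clos_get A p eps : closure2 A p -> eps > 0 ->
  exists qx qy, A (qx, qy) /\ fst p - eps < qx < fst p + eps /\ snd p - eps < qy < snd p + eps.
Proof.
  intros H He. destruct (H eps He) as [[qx qy] [HA [H1 H2]]].
  exists qx, qy. simpl in *. apply Rabs_def2 in H1. apply Rabs_def2 in H2.
  split; auto. split; lra.
Qed.

Lemma Rg_closed a A p : g <= a <= 1 -> (forall q, A q -> Rg a q) -> closure2 A p -> Rg a p.
Proof.
  intros Ha HA Hc. destruct p as [x y].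
  destruct s_facts as [Hs2 Hs]. destruct (alpha_facts a (proj1 Ha)) as [Ha1 Ha2].
  assert (G : forall eps, eps > 0 -> exists qx qy, Rg a (qx, qy) /\
     x - eps < qx < x + eps /\ y - eps < qy < y + eps).
  { intros eps He. destruct (clos_get A (x,y) eps Hc He) as [qx [qy [H1 H2]]].
    exists qx, qy. split; auto. }
  clear Hc HA.
  unfold Rg. repeat split.
  - destruct (Rle_dec (a - 1) x); auto. exfalso.
    destruct (G (a - 1 - x)) as [qx [qy [[Hq _] [H1 H2]]]]; lra.
  - destruct (Rle_dec x a); auto. exfalso.
    destruct (G (x - a)) as [qx [qy [[Hq _] [H1 H2]]]]; lra.
  - destruct (Rle_dec (1 - sqrt 2) y); auto. exfalso.
    destruct (G (1 - sqrt 2 - y)) as [qx [qy [[_ [Hq _]] [H1 H2]]]]; lra.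
  - destruct (Rle_dec y (sqrt 2)); auto. exfalso.
    destruct (G (y - sqrt 2)) as [qx [qy [[_ [Hq _]] [H1 H2]]]]; lra.
  - intros Hx. destruct (Rle_dec y (2 - sqrt 2)); auto. exfalso.
    assert (He : Rmin (- x) (y - (2 - sqrt 2)) > 0) by (apply Rmin_glb_lt; lra).
    destruct (G _ He) as [qx [qy [[_ [_ [Hq _]]] [H1 H2]]]].
    pose proof (Rmin_l (- x) (y - (2 - sqrt 2))). pose proof (Rmin_r (- x) (y - (2 - sqrt 2))).
    assert (qx < 0) by lra. specialize (Hq H3). lra.
  - intros Hy. destruct (Rle_dec (x * (2 + a)) 1); auto. exfalso.
    set (e := (x * (2 + a) - 1) / (2 + a)).
    assert (Hee : e > 0) by (unfold e; apply Rdiv_lt_0_compat; lra).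
    assert (He : Rmin e (sqrt 2 / 2 - 1 - y) > 0) by (apply Rmin_glb_lt; lra).
    destruct (G _ He) as [qx [qy [[_ [_ [_ Hq]]] [H1 H2]]]].
    pose proof (Rmin_l e (sqrt 2 / 2 - 1 - y)). pose proof (Rmin_r e (sqrt 2 / 2 - 1 - y)).
    assert (qy < sqrt 2 / 2 - 1) by lra. specialize (Hq H3).
    assert (e * (2 + a) = x * (2 + a) - 1) by (unfold e; field; lra).
    nra.
Qed.

Lemma Omega_Rg a p : g <= a <= 1 -> Omega a p -> Rg a p.
Proof.
  intros Ha [N Hc]. apply (Rg_closed a (image_n a N)); auto.
  intros q [x0 [Hx0 ->]]. apply Rg_TTn; auto.
  destruct s_facts as [Hs2 Hs]. unfold Rg. repeat split; try lra.
Qed.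

Lemma skip_bound k y : 1 <= k <= 2 -> -1 < y <= sqrt 2 -> 1 - 1 / sqrt 2 <= / (y + k).
Proof.
  intros Hk Hy. destruct s_facts as [Hs2 Hs].
  assert (E : 1 / sqrt 2 = sqrt 2 / 2) by (field_simplify_eq; lra).
  rewrite E.
  assert (Hw : (y + k) * / (y + k) = 1) by (field; lra).
  assert (Hwp : / (y + k) > 0) by (apply Rinv_0_lt_compat; lra).
  set (w := / (y + k)) in *.
  assert (H1 : (1 - sqrt 2 / 2) * (y + k) <= 1) by nra.
  nra.
Qed.

Lemma L_A' a b p : g <= a -> a < b -> b <= 1 -> Rg a p -> S (TT a p) (TT b p).
Proof.
  intros Ha Hab Hb Hp. destruct p as [x y]. apply L_A; auto.
  intros; apply Rg_nz; auto; lra.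
Qed.

Lemma step a b p q : g <= a -> a < b -> b <= 1 -> Rg a p -> S p q -> b - 1 <= fst q < b ->
  (exists j, (1 <= j)%nat /\ S (TT a p) (TTn b j q)) \/
  (1 - 1 / sqrt 2 <= snd (TT a p) /\
     exists j, (1 <= j)%nat /\ S (TT a (TT a p)) (TTn b j q)).
Proof.
  intros Ha Hab Hb Hp Hq Hr. assert (Ha' : g <= a <= 1) by lra.
  destruct s_facts as [Hs2 Hs]. destruct (alpha_facts a Ha) as [Ha1 Ha2].
  destruct p as [x y]. pose proof Hp as HRg. destruct Hp as [Hx [Hy [Hneg HE]]].
  assert (T1 : forall q, TTn b 1 q = TT b q) by reflexivity.
  assert (T2 : forall q, TTn b 2 q = TT b (TT b q)) by reflexivity.
  unfold S in Hq.
  destruct (Req_dec x 0) as [H0|H0].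
  - subst x. rewrite TT_0. left. exists 1%nat. split; [lia|]. rewrite T1.
    destruct Hq as [ -> | [ -> | [ -> | -> ]]]; simpl in Hr.
    + rewrite TT_0. unfold S; left; reflexivity.
    + rewrite Ropp_0, TT_0. unfold S; left; reflexivity.
    + lra.
    + lra.
  - assert (Hnz : x <> 0 -> y + digit a x <> 0) by (intros; apply Rg_nz; auto).
    destruct Hq as [ -> | [ -> | [ -> | -> ]]]; simpl in Hr.
    + left. exists 1%nat. split; [lia|]. rewrite T1. apply L_A; auto.
    + left. exists 1%nat. split; [lia|]. rewrite T1. apply L_C; auto.
    + left. exists 2%nat. split; [lia|]. rewrite T2.
      assert (x < 0) by lra. specialize (Hneg H).
      rewrite (L_B a b x y) by lra. apply L_F; auto; lra.
    + assert (Hx0 : 0 < x <= a) by lra.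
      pose proof (D_pos a x Ha' Hx0) as HD1.
      pose proof (digit_bounds a x) as Hdb.
      destruct (Dint a x) as [D HD]. rewrite HD in HD1, Hdb.
      apply le_IZR in HD1.
      assert (Hu : x * / x = 1) by (field; lra).
      destruct (Z.eq_dec D 1) as [E1|E1].
      * subst D. right. split.
        { rewrite (TT_nz a) by auto. rewrite HD. simpl snd. apply skip_bound; lra. }
        exists 1%nat. split; [lia|]. rewrite T1.
        rewrite (L_Dd1 a b x y) by (try lra; rewrite HD; reflexivity).
        apply L_A'; auto. apply Rg_TT; auto.
      * assert (HD2 : (2 <= D)%Z) by lia. apply IZR_le in HD2.
        assert (Hx1 : x < 1) by lra.
        destruct (Rlt_dec (x / (1 - x)) b) as [Hv|Hv].
        -- left. exists 2%nat. split; [lia|]. rewrite T2.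
           rewrite L_De1 by lra. rewrite L_g by lra. apply L_A'; auto.
        -- assert (Hvb : b * (1 - x) <= x).
           { apply Rnot_lt_le in Hv. unfold Rdiv in Hv.
             apply (Rmult_le_compat_r (1 - x)) in Hv; [|lra].
             rewrite Rmult_assoc, Rinv_l in Hv by lra. lra. }
           assert (HD3 : D = 2%Z).
           { destruct (Z.eq_dec D 2) as [E2|E2]; auto. exfalso.
             assert (HZ : (3 <= D)%Z) by lia. apply IZR_le in HZ.
             assert (/ x >= 2 + a) by lra.
             assert (Hxa : x * (2 + a) <= 1) by nra.
             assert (b * (2 + a) <= 1 + b) by nra.
             nra. }
           subst D. right. split.
           { rewrite (TT_nz a) by auto. rewrite HD. simpl snd. apply skip_bound; lra. }
           exists 2%nat. split; [lia|]. rewrite T2.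
           assert (Hxa : x * (1 + a) <= 1) by nra.
           assert (Hvv : x / (1 - x) < 1 + b).
           { apply (Rmult_lt_reg_r (1 - x)); [lra|].
             unfold Rdiv. rewrite Rmult_assoc, Rinv_l by lra. nra. }
           assert (Hvb' : b <= x / (1 - x)) by lra.
           rewrite (L_De2 b x y) by lra.
           assert (HR1 : Rg a (TT a (x, y))) by (apply Rg_TT; auto).
           rewrite (TT_nz a x y H0), HD in HR1 |- *. change (IZR 2) with 2 in *.
           apply L_F; auto.
           ++ intro. assert (/ x = 1) by lra.
              assert (x = 1) by (rewrite <- (Rinv_inv x), H1; field). lra.
           ++ intros; apply Rg_nz; auto.
Qed.

Lemma TTn_add b j k q : TTn b (j + k) q = TTn b j (TTn b k q).
Proof. unfold TTn. apply Nat.iter_add. Qed.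

Lemma TTn_S b j q : TTn b (Datatypes.S j) q = TT b (TTn b j q).
Proof. reflexivity. Qed.

Theorem lemma4p4 (alpha beta x y xt yt : R) (n : nat) :
  g <= alpha -> alpha < beta -> beta <= 1 ->
  Omega alpha (x, y) ->
  S (x, y) (xt, yt) ->
  (1 <= n)%nat ->
  beta - 1 <= xt < beta ->
  snd (TTn alpha n (x, y)) < 1 - 1 / sqrt 2 ->
  exists k : nat, (1 <= k)%nat /\
    S (TTn alpha n (x, y)) (TTn beta k (xt, yt)).
Proof.
  intros Ha Hab Hb HO HS Hn Hxt Hyn.
  assert (Ha' : g <= alpha <= 1) by lra.
  destruct (alpha_facts alpha Ha) as [Ha1 Ha2].
  assert (HR0 : Rg alpha (x, y)) by (apply Omega_Rg; auto).
  set (P := fun m => TTn alpha m (x, y)).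
  set (Good := fun m => exists k, ((1 <= k)%nat \/ m = 0%nat) /\
     S (P m) (TTn beta k (xt, yt)) /\ beta - 1 <= fst (TTn beta k (xt, yt)) < beta).
  assert (Hgood : forall m, Good m \/ (1 - 1 / sqrt 2 <= snd (P m) /\ Good (Datatypes.S m))).
  { induction m as [|m IH].
    - left. exists 0%nat. split; [right; reflexivity|]. split; [exact HS|exact Hxt].
    - destruct IH as [[k [Hk [HSk Hrk]]] | [_ HG]].
      + assert (HRm : Rg alpha (P m)) by (apply Rg_TTn; auto).
        destruct (step alpha beta (P m) (TTn beta k (xt, yt)) Ha Hab Hb HRm HSk Hrk)
          as [[j [Hj HSj]] | [Hc [j [Hj HSj]]]].
        * left. exists (j + k)%nat. split; [left; lia|].
          rewrite TTn_add. split; [exact HSj|].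
          destruct j as [|j']; [lia|]. rewrite TTn_S. apply TT_range. lra.
        * right. split; [exact Hc|]. exists (j + k)%nat. split; [left; lia|].
          rewrite TTn_add. split; [exact HSj|].
          destruct j as [|j']; [lia|]. rewrite TTn_S. apply TT_range. lra.
      + left. exact HG. }
  destruct (Hgood n) as [[k [Hk [HSk _]]] | [Hc _]].
  - exists k. split; [lia|exact HSk].
  - unfold P in Hc. lra.
Qed.
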